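(* Let $p$ be a prime, $G=\mathbb{Z}_p$, and let $f,g$ be flows on $n$. Suppose there is a set of indices $I\subseteq[n]$ with $|I|=p-1$ such that $f(i)\neq g(i)$ for every $i\in I$. Then for any subset $I'\subseteq[n]$ disjoint from $I$ there exists a subset $I''\subseteq I$ such that $f$ and $g$ can be exchanged on $I'\cup I''$, i.e. $\sum_{i\in I'\cup I''}f(i)=\sum_{i\in I'\cup I''}g(i)$ in $\mathbb{Z}_p$.
   Context: For a finite abelian group $G$ and $n\in\mathbb{N}$, a flow on $n$ is a function $f:[n]\to G$, $[n]=\{1,\dots,n\}$, with $\sum_{i=1}^n f(i)=0$. Exchanging two flows $f,g$ on a set of indices $J$ means replacing them by $f',g'$ with $f'(i)=f(i)$, $g'(i)=g(i)$ for $i\notin J$ and $f'(i)=g(i)$, $g'(i)=f(i)$ for $i\in J$; this yields flows exactly when $\sum_{i\in J}f(i)=\sum_{i\in J}g(i)$. $\mathbb{Z}_p$ is the cyclic group of order $p$. *)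

(* Defs.v *)
From mathcomp Require Import all_boot all_order all_algebra.
Set Implicit Arguments. Unset Strict Implicit. Unset Printing Implicit Defensive.
Import GRing.Theory.
Local Open Scope ring_scope.

(* A flow on [n] with values in a (finite abelian) group G: f : [n] -> G
   with sum zero. Indices [n] = {1..n} are represented by 'I_n. *)
Definition is_flow (G : zmodType) (n : nat) (f : 'I_n -> G) : Prop :=
  \sum_(i < n) f i = 0.

(* f and g can be exchanged on J (the exchanged functions are again flows)
   iff the sums over J agree. *)
Definition exchangeable (G : zmodType) (n : nat) (f g : 'I_n -> G)
  (J : {set 'I_n}) : Prop :=
  \sum_(i in J) f i = \sum_(i in J) g i.

(* Main.v *)
Require Import Defs.
From mathcomp Require Import all_boot all_order all_algebra.
Import GRing.Theory.
Local Open Scope ring_scope.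

Lemma Fp_natr_val (p : nat) (x : 'F_p) : (nat_of_ord x)%:R = x.
Proof. exact: natr_Zp. Qed.

Lemma closed_full (p : nat) (pr_p : prime p) (S : {set 'F_p}) (d : 'F_p) (s0 : 'F_p) :
  d != 0 -> s0 \in S -> (forall s, s \in S -> s + d \in S) -> S = setT.
Proof.
move=> dn0 s0S cl; apply/setP=> y; rewrite inE.
have H : forall m : nat, s0 + d *+ m \in S.
  elim=> [|m IH]; first by rewrite mulr0n addr0.
  by rewrite mulrS (addrC d) addrA; apply: cl.
have := H (nat_of_ord ((y - s0) / d)).
by rewrite -mulr_natr Fp_natr_val mulrCA divff // mulr1 addrC subrK.
Qed.

Definition sums (p n : nat) (d : 'I_n -> 'F_p) (J : {set 'I_n}) : {set 'F_p} :=
  [set \sum_(i in K) d i | K : {set 'I_n} in powerset J].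

Arguments sums {p n}.

Lemma sums_grow (p n : nat) (pr_p : prime p) (d : 'I_n -> 'F_p) (I : {set 'I_n})
  (hI : #|I| = p.-1) (hd : forall i, i \in I -> d i != 0) :
  forall k (J : {set 'I_n}), #|J| = k -> J \subset I -> (#|J| < #|sums d J|)%N.
Proof.
elim=> [|k IH] J cJ sJ.
  rewrite cJ card_gt0; apply/set0Pn; exists (\sum_(i in set0) d i).
  by apply/imsetP; exists set0 => //; rewrite powersetE sub0set.
have : (0 < #|J|)%N by rewrite cJ.
rewrite card_gt0 => /set0Pn [x xJ].
set J' := J :\ x.
have cJ' : #|J'| = k by have := cardsD1 x J; rewrite xJ cJ add1n => -[].
have sJ' : J' \subset I by apply: subset_trans sJ; apply: subsetDl.
have IH' := IH J' cJ' sJ'.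
have sub : sums d J' \subset sums d J.
  apply/subsetP=> y /imsetP [K]; rewrite powersetE => KJ' ->.
  apply/imsetP; exists K => //; rewrite powersetE.
  by apply: subset_trans KJ' _; apply: subsetDl.
have dx : d x != 0 by apply: hd; apply: (subsetP sJ).
have cJp : (#|J| < p)%N.
  have := subset_leq_card sJ; rewrite hI.
  have := prime_gt1 pr_p; move: (p) => q q1 hq.
  by rewrite -ltnS (ltn_predK q1) in hq.
case: (boolP [forall s, (s \in sums d J') ==> (s + d x \in sums d J')]) => [/forallP cl|].
  have s0 : \sum_(i in set0) d i \in sums d J'.
    by apply/imsetP; exists set0 => //; rewrite powersetE sub0set.
  have full := @closed_full p pr_p _ _ _ dx s0 (fun s hs => implyP (cl s) hs).
  have : sums d J = setT by apply/eqP; rewrite eqEsubset subsetT /= -full.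
  by move=> ->; rewrite cardsT card_Fp.
rewrite negb_forall => /existsP [s]; rewrite negb_imply => /andP [sS nS].
have : (#|sums d J'| < #|sums d J|)%N.
  apply: proper_card; rewrite properE sub /=.
  apply/subsetPn; exists (s + d x) => //.
  move: sS => /imsetP [K]; rewrite powersetE => KJ' ->.
  apply/imsetP; exists (x |: K).
    by rewrite powersetE subUset sub1set xJ /=; apply: subset_trans KJ' _; apply: subsetDl.
  have xK : x \notin K by apply/negP => /(subsetP KJ'); rewrite !inE eqxx.
  by rewrite (big_setU1 _ xK) /= addrC.
move=> h; rewrite cJ; rewrite cJ' in IH'; exact: leq_ltn_trans IH' h.
Qed.

Theorem lemma3p1 (p n : nat) (pr_p : prime p) (f g : 'I_n -> 'F_p)
  (hf : is_flow f) (hg : is_flow g)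
  (I : {set 'I_n}) (hI : #|I| = p.-1) (hfg : forall i, i \in I -> f i <> g i)
  (I' : {set 'I_n}) (hdis : [disjoint I & I']) :
  exists2 I'' : {set 'I_n}, I'' \subset I & exchangeable f g (I' :|: I'').
Proof.
set d := fun i => f i - g i.
have hd : forall i, i \in I -> d i != 0.
  by move=> i iI; rewrite subr_eq0; apply/eqP; apply: hfg.
have := @sums_grow p n pr_p d I hI hd _ I (erefl _) (subxx I).
rewrite hI => hc.
have full : sums d I = setT.
  apply/eqP; rewrite eqEcard subsetT cardsT card_Fp //.
  by rewrite prednK ?prime_gt0 in hc.
have : - \sum_(i in I') d i \in sums d I by rewrite full inE.
case/imsetP=> K; rewrite powersetE => KI hK.
exists K => //.
rewrite /exchangeable.
have dis : [disjoint I' & K].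
  by rewrite disjoint_sym; apply: disjointWl KI _.
have E : forall F : 'I_n -> 'F_p,
    \sum_(i in I' :|: K) F i = \sum_(i in I') F i + \sum_(i in K) F i.
  by move=> F; rewrite -bigU //; apply: eq_bigl => i; rewrite !inE.
rewrite !E; apply/eqP; rewrite -subr_eq0 opprD addrACA -!sumrB.
have -> : \sum_(i in K) (f i - g i) = \sum_(i in K) d i by [].
by rewrite -hK addrN.
Qed.
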